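(* Let $h$ be a bilinear form on $V$. For every double vector $\omega\in\mathcal D(V)$, $$\widehat h_R(\omega)=e^h\circ\omega\quad\text{and}\quad\widehat h_L(\omega)=\omega\circ e^{(h^t)},$$ where $e^h=\sum_{p\geq0}\frac{h^p}{p!}$.
   Context: $(V,g)$ is a Euclidean real vector space of dimension $n$, identified with $V^*$ via $g$, so double forms and double vectors $\mathcal D(V)=\bigoplus_{p,q}\Lambda^pV\otimes\Lambda^qV$ are identified; $\Lambda V$ carries the inner product induced by $g$. Exterior product: $(\theta_1\otimes\theta_2)(\theta_3\otimes\theta_4)=(\theta_1\wedge\theta_3)\otimes(\theta_2\wedge\theta_4)$; powers $h^p$ are for this product, $h^0=1$, and $h$ is regarded as a $(1,1)$ double vector. Composition product: $(\theta_1\otimes\theta_2)\circ(\theta_3\otimes\theta_4)=\langle\theta_1,\theta_4\rangle\theta_3\otimes\theta_2$ ($0$ if $\theta_1,\theta_4$ have different degrees), extended bilinearly. Transpose: $h^t(x,y)=h(y,x)$. $\bar h$ is the endomorphism of $V$ with $\langle\bar h(v),w\rangle=h(v,w)$, $\widehat h$ the exterior algebra endomorphism of $\Lambda V$ with $\widehat h(1)=1$, $\widehat h(v_1\wedge\cdots\wedge v_p)=\bar h(v_1)\wedge\cdots\wedge\bar h(v_p)$, and $\widehat h_R(\theta_1\otimes\theta_2)=\theta_1\otimes\widehat h(\theta_2)$, $\widehat h_L(\theta_1\otimes\theta_2)=\widehat h(\theta_1)\otimes\theta_2$, extended linearly. *)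

(* Defs.v *)
From mathcomp Require Import all_boot all_order all_algebra.
Set Implicit Arguments.
Unset Strict Implicit.
Unset Printing Implicit Defensive.
Import Order.TTheory GRing.Theory Num.Theory.
Local Open Scope ring_scope.

(* Model: V = 'rV[R]_n with the standard (Euclidean) inner product and the
   orthonormal basis delta_mx 0 i.  The exterior algebra Lambda V is modelled
   by its coordinates in the orthonormal basis e_I = e_{i1} /\ ... /\ e_{ik}
   (I = {i1 < ... < ik} a subset of 'I_n); double vectors D(V) by their
   coordinates in the basis e_I (x) e_J of Lambda V (x) Lambda V. *)

Section DoubleForms.
Variables (R : realFieldType) (n : nat).

Definition vecV := 'rV[R]_n.
Definition ext := {ffun {set 'I_n} -> R}.
Definition dvec := {ffun {set 'I_n} * {set 'I_n} -> R}.

Definition evec (i : 'I_n) : vecV := delta_mx 0 i.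
Definition gV (u v : vecV) : R := \sum_(i < n) u 0 i * v 0 i.

Definition ebas (I : {set 'I_n}) : ext := [ffun K => (K == I)%:R].
Definition ext_one : ext := ebas set0.
Definition ext_of_vec (v : vecV) : ext :=
  [ffun K => \sum_(i < n) (K == [set i])%:R * v 0 i].

(* inner product on Lambda V induced by g (e_I orthonormal) *)
Definition ext_dot (a b : ext) : R := \sum_(I : {set 'I_n}) a I * b I.

(* sign of e_I /\ e_J = sgn e_{I u J} for disjoint I, J *)
Definition wsign (I J : {set 'I_n}) : R :=
  (-1) ^+ #|[set p : 'I_n * 'I_n | [&& p.1 \in I, p.2 \in J & (p.2 < p.1)%N]]|.

Definition wedge (a b : ext) : ext :=
  [ffun K => \sum_(I : {set 'I_n}) \sum_(J : {set 'I_n} |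
      (I :&: J == set0) && (I :|: J == K)) wsign I J * a I * b J].

Definition wedge_list (s : seq ext) : ext := foldr wedge ext_one s.

Definition tens (a b : ext) : dvec := [ffun p => a p.1 * b p.2].

(* exterior product of double vectors, extended bilinearly from
   (t1 (x) t2)(t3 (x) t4) = (t1 /\ t3) (x) (t2 /\ t4) *)
Definition dmul (w1 w2 : dvec) : dvec :=
  [ffun p => \sum_(I : {set 'I_n}) \sum_(J : {set 'I_n})
     \sum_(K : {set 'I_n}) \sum_(L : {set 'I_n})
       w1 (I, J) * w2 (K, L) *
       tens (wedge (ebas I) (ebas K)) (wedge (ebas J) (ebas L)) p].

Definition done : dvec := tens ext_one ext_one.
Definition dpow (w : dvec) (k : nat) : dvec := iter k (dmul w) done.

(* composition product, extended bilinearly from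
   (t1 (x) t2) o (t3 (x) t4) = <t1, t4> t3 (x) t2 *)
Definition dcomp (w1 w2 : dvec) : dvec :=
  [ffun p => \sum_(I : {set 'I_n}) \sum_(J : {set 'I_n})
     \sum_(K : {set 'I_n}) \sum_(L : {set 'I_n})
       w1 (I, J) * w2 (K, L) *
       (ext_dot (ebas I) (ebas L) * tens (ebas K) (ebas J) p)].

(* e^w = sum_{p >= 0} w^p / p!  (the terms with p > n vanish) *)
Definition dexp (w : dvec) : dvec :=
  [ffun p => \sum_(k < n.+1) (k`!%:R)^-1 * dpow w k p].

Definition form_dvec (h : vecV -> vecV -> R) : dvec :=
  [ffun p => \sum_(i < n) \sum_(j < n)
     h (evec i) (evec j) * tens (ext_of_vec (evec i)) (ext_of_vec (evec j)) p].

Definition form_tr (h : vecV -> vecV -> R) : vecV -> vecV -> R :=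
  fun x y => h y x.

(* hbar : <hbar v, w> = h(v, w) *)
Definition hbar (h : vecV -> vecV -> R) (v : vecV) : vecV :=
  \row_j h v (evec j).

(* hhat : exterior algebra endomorphism, hhat 1 = 1,
   hhat (v1 /\ ... /\ vp) = hbar v1 /\ ... /\ hbar vp, extended linearly *)
Definition hhat (h : vecV -> vecV -> R) (a : ext) : ext :=
  [ffun K => \sum_(I : {set 'I_n}) a I *
     wedge_list [seq ext_of_vec (hbar h (evec i)) | i <- enum I] K].

Definition hhatR (h : vecV -> vecV -> R) (w : dvec) : dvec :=
  [ffun p => \sum_(I : {set 'I_n}) \sum_(J : {set 'I_n})
     w (I, J) * tens (ebas I) (hhat h (ebas J)) p].

Definition hhatL (h : vecV -> vecV -> R) (w : dvec) : dvec :=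
  [ffun p => \sum_(I : {set 'I_n}) \sum_(J : {set 'I_n})
     w (I, J) * tens (hhat h (ebas I)) (ebas J) p].

End DoubleForms.

(* Main.v *)
Set Warnings "-all".
Require Import Defs.
From mathcomp Require Import all_boot all_order all_algebra.
From mathcomp Require Import ring.
Import GRing.Theory Num.Theory.
Local Open Scope ring_scope.
Set Implicit Arguments. Unset Strict Implicit.

Section Seqs.
Variable n : nat.
Definition ltO (x y : 'I_n) := (x < y)%N.

Lemma ltO_trans : transitive ltO.
Proof. move=> y x z; rewrite /ltO; exact: ltn_trans. Qed.

Lemma sorted_enumP (P : {set 'I_n}) : sorted ltO (enum P).
Proof.
rewrite /enum_mem; apply: sorted_filter; first exact: ltO_trans.
rewrite -enumT.
have := iota_ltn_sorted 0 n; rewrite -val_enum_ord sorted_map.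
by [].
Qed.

Lemma index_count (s : seq 'I_n) i : sorted ltO s -> i \in s ->
  index i s = count (fun p : 'I_n => (p < i)%N) s.
Proof.
elim: s => [//|x s IH] /= Hs; rewrite inE.
have Hall : all (ltO x) s.
  by apply: order_path_min => //; exact: ltO_trans.
case: eqP => [-> _|Hne /= Hi].
  rewrite eqxx; apply/esym/eqP; rewrite -leqn0 leqNgt ltnn add0n -has_count.
  by apply/hasPn => y Hy; move/allP: Hall => /(_ y Hy); rewrite /ltO -leqNgt => /ltnW.
have Hxi : (x < i)%N by move/allP: Hall => /(_ i Hi).
have /negbTE -> : x != i by apply/eqP => E; apply: Hne; rewrite E.
rewrite Hxi add1n IH //; exact: path_sorted Hs.
Qed.

Lemma rk_index (P : {set 'I_n}) i : i \in P ->
  #|[set p in P | (p < i)%N]| = index i (enum P).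
Proof.
move=> Hi; rewrite (@index_count (enum P) i (sorted_enumP P)) ?mem_enum //.
rewrite -sum1_card -sum1_count big_enum_cond.
by apply: eq_bigl => p; rewrite !inE.
Qed.

Lemma enum_setD1 (P : {set 'I_n}) i :
  enum (P :\ i) = rem i (enum P).
Proof.
rewrite rem_filter ?enum_uniq // /enum_mem -filter_predI.
by apply: eq_filter => x; rewrite /= !inE andbC.
Qed.

Lemma enum_cons (P : {set 'I_n}) x s : enum P = x :: s ->
  [/\ x \in P, enum (P :\ x) = s & index x (enum P) = 0%N].
Proof.
move=> E; split.
- by rewrite -mem_enum E inE eqxx.
- rewrite enum_setD1 E /= eqxx //.
- by rewrite E /= eqxx.
Qed.
End Seqs.

Section W.
Variables (R : realFieldType) (n : nat).
Implicit Types (P Q I J K L : {set 'I_n}).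

Lemma sum_delta_r (T : finType) (F : T -> R) (a : T) :
  \sum_x F x * (x == a)%:R = F a.
Proof.
rewrite (bigD1 a) //= eqxx mulr1 big1 ?addr0 // => x /negbTE ->.
by rewrite mulr0.
Qed.

Lemma sum_delta_l (T : finType) (F : T -> R) (a : T) :
  \sum_x (x == a)%:R * F x = F a.
Proof. rewrite -(sum_delta_r F a); apply: eq_bigr => x _; exact: mulrC. Qed.

Definition cnd I K P := (I :&: K == set0) && (I :|: K == P).

Lemma wedge_ebas I K P :
  wedge (ebas R I) (ebas R K) P = (cnd I K P)%:R * wsign R I K.
Proof.
rewrite /wedge ffunE.
under eq_bigr => I' _ do rewrite big_mkcond /=.
rewrite (bigD1 I) //= [X in _ + X]big1 ?addr0; last first.
  move=> I' /negbTE HI; apply: big1 => J _.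
  by case: ifP => // _; rewrite /ebas !ffunE HI mulr0 mul0r.
rewrite (bigD1 K) //= [X in _ + X]big1 ?addr0; last first.
  move=> J /negbTE HJ.
  by case: ifP => // _; rewrite /ebas !ffunE HJ mulr0.
rewrite /ebas !ffunE !eqxx /cnd.
by case: ifP => _; rewrite ?mulr1 ?mul1r ?mul0r.
Qed.

Definition sg P (i : 'I_n) : R := (-1) ^+ #|[set p in P | (p < i)%N]|.

Lemma wsign1 P i : i \in P -> wsign R [set i] (P :\ i) = sg P i.
Proof.
move=> Hi; rewrite /wsign /sg; congr (_ ^+ _).
have -> : [set p : 'I_n * 'I_n | [&& p.1 \in [set i], p.2 \in P :\ i & (p.2 < p.1)%N]]
   = (fun q => (i, q)) @: [set p in P | (p < i)%N].
  apply/setP => [[a b]]; rewrite !inE /=.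
  apply/idP/imsetP => [/and3P [/eqP -> /andP [_ Hb] Hl]|[q]].
    by exists b => //; rewrite inE Hb.
  rewrite inE => /andP [Hq Hl] [-> ->].
  by rewrite eqxx Hq Hl andbT /=; rewrite neq_ltn Hl.
by rewrite card_imset // => x y [].
Qed.

Lemma cnd1 i K P : cnd [set i] K P = (i \in P) && (K == P :\ i).
Proof.
rewrite /cnd; apply/idP/idP.
  move=> /andP [/eqP HI /eqP <-].
  have HiK : i \notin K.
    apply/negP => HiK; have : i \in [set i] :&: K by rewrite inE set11 HiK.
    by rewrite HI inE.
  rewrite !inE eqxx /=; apply/eqP.
  by rewrite setU1K.
move=> /andP [Hi /eqP ->]; apply/andP; split.
  apply/eqP/setP => x; rewrite !inE.
  by case: (x == i) => //=.
by rewrite -/([set i] :|: (P :\ i)) setD1K.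
Qed.

Lemma sum_wedge1 (F : {set 'I_n} -> R) i P :
  \sum_K F K * ((cnd [set i] K P)%:R * wsign R [set i] K)
   = if i \in P then sg P i * F (P :\ i) else 0.
Proof.
under eq_bigr => K _ do rewrite cnd1.
case: ifP => Hi.
  rewrite (bigD1 (P :\ i)) //= eqxx [X in _ + X]big1 ?addr0.
    by rewrite mul1r wsign1 // mulrC.
  by move=> K /negbTE ->; rewrite mul0r mulr0.
by apply: big1 => K _; rewrite mul0r mulr0.
Qed.
End W.

Section W2.
Variables (R : realFieldType) (n : nat).
Implicit Types (P Q I J K L : {set 'I_n}).

Lemma sum_set1 (c : 'I_n -> R) (G : {set 'I_n} -> R) :
  \sum_I (\sum_i (I == [set i])%:R * c i) * G I = \sum_i c i * G [set i].
Proof.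
under eq_bigr => I _ do rewrite mulr_suml.
rewrite exchange_big; apply: eq_bigr => i _.
under eq_bigr => I _ do rewrite -mulrA.
by rewrite sum_delta_l.
Qed.

Lemma sum_set11 (c : 'I_n -> 'I_n -> R) (X : {set 'I_n} -> {set 'I_n} -> R) :
  \sum_I \sum_J (\sum_i \sum_j c i j * ((I == [set i])%:R * (J == [set j])%:R)) * X I J
  = \sum_i \sum_j c i j * X [set i] [set j].
Proof.
have E : forall I J, (\sum_i \sum_j c i j * ((I == [set i])%:R * (J == [set j])%:R))
   = \sum_i (I == [set i])%:R * (\sum_j (J == [set j])%:R * c i j).
  move=> I J; apply: eq_bigr => i _; rewrite mulr_sumr; apply: eq_bigr => j _.
  by ring.
under eq_bigr => I _ do under eq_bigr => J _ do rewrite E mulr_suml.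
under eq_bigr => I _ do rewrite exchange_big.
rewrite exchange_big; apply: eq_bigr => i _.
under eq_bigr => I _ do under eq_bigr => J _ do rewrite -mulrA.
under eq_bigr => I _ do rewrite -mulr_sumr.
rewrite sum_delta_l.
under eq_bigr => J _ do rewrite mulr_suml.
rewrite exchange_big; apply: eq_bigr => j _.
under eq_bigr => J _ do rewrite -mulrA.
by rewrite sum_delta_l.
Qed.

Lemma ext_of_evec i K : ext_of_vec (evec R i) K = (K == [set i])%:R.
Proof.
rewrite ffunE /evec.
under eq_bigr => j _ do rewrite mxE eqxx /=.
by rewrite sum_delta_r.
Qed.

Lemma form_dvecE (h : vecV R n -> vecV R n -> R) I J :
  form_dvec h (I, J) = \sum_i \sum_j h (evec R i) (evec R j) *
     ((I == [set i])%:R * (J == [set j])%:R).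
Proof.
rewrite ffunE; apply: eq_bigr => i _; apply: eq_bigr => j _.
by rewrite ffunE /= !ext_of_evec.
Qed.

Lemma wedge_vec (u : 'rV[R]_n) (W : ext R n) P :
  wedge (ext_of_vec u) W P = \sum_(i in P) u 0 i * sg R P i * W (P :\ i).
Proof.
rewrite /wedge ffunE.
have E : forall I, \sum_(J | (I :&: J == set0) && (I :|: J == P))
     wsign R I J * ext_of_vec u I * W J
   = ext_of_vec u I * \sum_J W J * ((cnd I J P)%:R * wsign R I J).
  move=> I; rewrite big_mkcond mulr_sumr; apply: eq_bigr => J _ /=.
  rewrite /cnd; case: ifP => _; rewrite ?mul1r ?mul0r ?mulr0 //.
  by ring.
under eq_bigr => I _ do rewrite E ffunE.
rewrite sum_set1 [RHS]big_mkcond; apply: eq_bigr => i _ /=.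
rewrite sum_wedge1; case: ifP => _; last by rewrite mulr0.
by rewrite mulrA.
Qed.

Lemma dmul_form (h : vecV R n -> vecV R n -> R) (W : dvec R n) P Q :
  dmul (form_dvec h) W (P, Q) = \sum_(i in P) \sum_(j in Q)
     h (evec R i) (evec R j) * (sg R P i * sg R Q j) * W (P :\ i, Q :\ j).
Proof.
rewrite /dmul ffunE.
have E : forall I J, \sum_K \sum_L form_dvec h (I, J) * W (K, L) *
     tens (wedge (ebas R I) (ebas R K)) (wedge (ebas R J) (ebas R L)) (P, Q)
   = form_dvec h (I, J) * \sum_K ((cnd I K P)%:R * wsign R I K) *
       \sum_L W (K, L) * ((cnd J L Q)%:R * wsign R J L).
  move=> I J; rewrite mulr_sumr; apply: eq_bigr => K _.
  rewrite !mulr_sumr; apply: eq_bigr => L _.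
  rewrite [tens _ _ _]ffunE /= !wedge_ebas.
  by ring.
under eq_bigr => I _ do under eq_bigr => J _ do rewrite E form_dvecE.
rewrite sum_set11.
rewrite [RHS]big_mkcond; apply: eq_bigr => i _ /=.
under eq_bigr => j _ do under eq_bigr => K _ do rewrite sum_wedge1 mulrC.
under eq_bigr => j _ do rewrite sum_wedge1.
case: ifP => HiP; last by apply: big1 => j _; rewrite mulr0.
rewrite [RHS]big_mkcond; apply: eq_bigr => j _ /=.
case: ifP => _; last by rewrite !mulr0.
by ring.
Qed.
End W2.

Section D.
Variables (R : realFieldType) (n : nat) (hh : 'I_n -> 'I_n -> R).
Implicit Types (P Q I J K L : {set 'I_n}).

Definition hn (a b : nat) : R :=
  match (insub a : option 'I_n), (insub b : option 'I_n) with
  | Some x, Some y => hh x y | _, _ => 0 end.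
Definition Mk k (s t : seq nat) : 'M[R]_k :=
  \matrix_(a, b) hn (nth 0%N s a) (nth 0%N t b).
Definition sv P : seq nat := map val (enum P).
Definition Dt P Q : R :=
  if #|P| == #|Q| then \det (Mk #|P| (sv P) (sv Q)) else 0.
Definition dropn (a : nat) (s : seq nat) := take a s ++ drop a.+1 s.

Lemma nth_dropn s a a' : (a <= size s)%N ->
  nth 0%N (dropn a s) a' = nth 0%N s (bump a a').
Proof.
move=> Ha; rewrite /dropn nth_cat size_takel // /bump.
case: ltnP => H.
  by rewrite nth_take // leqNgt H add0n.
rewrite nth_drop add1n addSn subnKC //.
Qed.

Lemma minor_Mk k s t (a b : 'I_k.+1) : (a <= size s)%N -> (b <= size t)%N ->
  row' a (col' b (Mk k.+1 s t)) = Mk k (dropn a s) (dropn b t).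
Proof.
move=> Ha Hb; apply/matrixP => x y; rewrite !mxE /=.
by rewrite !nth_dropn.
Qed.

Lemma sv_setD1 P i : sv (P :\ i) = dropn (index i (enum P)) (sv P).
Proof.
by rewrite /sv enum_setD1 remE map_cat map_take map_drop.
Qed.

Lemma hn_val (x y : 'I_n) : hn x y = hh x y.
Proof. by rewrite /hn !valK. Qed.

Lemma nth_sv P (x0 : 'I_n) a : (a < #|P|)%N ->
  nth 0%N (sv P) a = val (nth x0 (enum P) a).
Proof. by move=> Ha; rewrite /sv (nth_map x0) // -cardE. Qed.

Lemma sum_in_enum Q (x0 : 'I_n) (F : 'I_n -> R) :
  \sum_(j in Q) F j = \sum_(b < #|Q|) F (nth x0 (enum Q) b).
Proof. rewrite big_enum_val; apply: eq_bigr => b _; by rewrite (enum_val_nth x0). Qed.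

Lemma Dt_exp P Q i : i \in P ->
  Dt P Q = \sum_(j in Q) sg R P i * sg R Q j * hh i j * Dt (P :\ i) (Q :\ j).
Proof.
move=> Hi; have cP := cardsD1 i P; rewrite Hi add1n in cP.
rewrite /Dt; case: (boolP (#|P| == #|Q|)) => HPQ; last first.
  apply/esym/big1 => j Hj; have cQ := cardsD1 j Q; rewrite Hj add1n in cQ.
  by rewrite ifF ?mulr0 //; apply/negbTE; move: HPQ; rewrite cP cQ eqSS.
move: (HPQ); rewrite cP => /eqP HQ.
set k := #|P :\ i|.
have Ha : (index i (enum P) < k.+1)%N by rewrite -cP cardE index_mem mem_enum.
rewrite (expand_det_row _ (Ordinal Ha)).
rewrite (sum_in_enum Q i) -HQ; apply: eq_bigr => b _.
set j := nth i (enum Q) b.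
have Hb : (b < size (enum Q))%N by rewrite -cardE -HQ.
have Hj : j \in Q by rewrite -mem_enum mem_nth.
have cQ := cardsD1 j Q; rewrite Hj add1n in cQ.
have Eb : index j (enum Q) = b by rewrite index_uniq ?enum_uniq.
rewrite ifT; last by apply/eqP/succn_inj; rewrite HQ cQ.
rewrite mxE (nth_sv i); last by rewrite cP.
rewrite (nth_sv i); last by rewrite -HQ.
rewrite nth_index ?mem_enum // -/j hn_val.
rewrite /cofactor minor_Mk; last 2 first.
- by rewrite size_map -cardE cP ltnW.
- by rewrite size_map -cardE -HQ ltnW.
rewrite !sv_setD1 Eb /sg !rk_index // Eb exprD /=.
by ring.
Qed.

Lemma Dt0 Q : Dt set0 Q = (Q == set0)%:R.
Proof.
rewrite /Dt cards0 eq_sym cards_eq0; case: ifP => _ //.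
by rewrite det_mx00.
Qed.

Lemma Dt_tr P Q : Dt P Q = (if #|P| == #|Q| then
   \det (\matrix_(a < #|P|, b < #|P|) hn (nth 0%N (sv P) a) (nth 0%N (sv Q) b)) else 0).
Proof. by []. Qed.
End D.

Section H.
Variables (R : realFieldType) (n : nat) (h : vecV R n -> vecV R n -> R).
Implicit Types (P Q I J K L : {set 'I_n}).
Definition hhh (i j : 'I_n) := h (evec R i) (evec R j).

Lemma wl_Dt m : forall L, #|L| = m -> forall Q,
  wedge_list [seq ext_of_vec (hbar h (evec R i)) | i <- enum L] Q = Dt hhh L Q.
Proof.
elim: m => [|m IH] L HL Q.
  move/eqP: HL; rewrite cards_eq0 => /eqP ->.
  by rewrite enum_set0 /= Dt0 /ext_one /ebas ffunE.
case E: (enum L) => [|x s].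
  by move: HL; rewrite cardE E.
have [Hx Es Ei] := enum_cons E.
have cL := cardsD1 x L; rewrite Hx add1n HL in cL; case: cL => cL.
rewrite /= wedge_vec (Dt_exp _ _ Hx); apply: eq_bigr => j Hj.
rewrite -Es IH //; rewrite mxE /sg (rk_index Hx) Ei expr0 /hhh.
by ring.
Qed.

Lemma hhat_Dt L Q : hhat h (ebas R L) Q = Dt hhh L Q.
Proof.
rewrite ffunE.
under eq_bigr => I _ do rewrite ffunE mulrC.
by rewrite sum_delta_r (wl_Dt (erefl _)).
Qed.

Lemma dpow_Dt k : forall P Q,
  dpow (form_dvec h) k (P, Q) = (#|P| == k)%:R * k`!%:R * Dt hhh P Q.
Proof.
elim: k => [|k IH] P Q.
  rewrite /dpow /= /Defs.done /tens ffunE /= /ext_one /ebas !ffunE cards_eq0.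
  case: (eqVneq P set0) => [->|_]; last by rewrite !mul0r.
  by rewrite Dt0 /= fact0 !mul1r.
have -> : dpow (form_dvec h) k.+1 = dmul (form_dvec h) (dpow (form_dvec h) k) by [].
rewrite dmul_form.
have E : forall i, i \in P -> \sum_(j in Q) h (evec R i) (evec R j) *
    (sg R P i * sg R Q j) * dpow (form_dvec h) k (P :\ i, Q :\ j)
   = (#|P| == k.+1)%:R * k`!%:R * Dt hhh P Q.
  move=> i Hi; rewrite (Dt_exp _ _ Hi) !mulr_sumr; apply: eq_bigr => j _.
  rewrite IH; have cP := cardsD1 i P; rewrite Hi add1n in cP.
  by rewrite cP eqSS /hhh; ring.
rewrite (eq_bigr _ E) sumr_const; case: (eqVneq #|P| k.+1) => [->|_].
  by rewrite factS natrM -mulr_natr; ring.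
by rewrite !mul0r mul0rn.
Qed.

Lemma dexp_Dt P Q : dexp (form_dvec h) (P, Q) = Dt hhh P Q.
Proof.
rewrite ffunE.
have HP : (#|P| < n.+1)%N by rewrite ltnS; have := max_card (mem P); rewrite card_ord.
rewrite (bigD1 (Ordinal HP)) //= [X in _ + X]big1 ?addr0; last first.
  move=> k Hk; rewrite dpow_Dt.
  have /negbTE -> : #|P| != k.
    by apply: contra Hk => /eqP E; apply/eqP/val_inj; rewrite /= E.
  by rewrite !mul0r mulr0.
rewrite dpow_Dt eqxx mul1r mulrA mulVf ?mul1r //.
by rewrite pnatr_eq0 -lt0n fact_gt0.
Qed.
End H.

Section Final.
Variables (R : realFieldType) (n : nat).
Implicit Types (P Q I J K L : {set 'I_n}).

Lemma sum_only (T : finType) (F : T -> R) (a : T) :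
  (forall x, x != a -> F x = 0) -> \sum_x F x = F a.
Proof. by move=> H; rewrite (bigD1 a) //= big1 ?addr0. Qed.

Lemma ebasE I P : ebas R I P = (P == I)%:R.
Proof. by rewrite ffunE. Qed.

Lemma ext_dot_ebas I L : ext_dot (ebas R I) (ebas R L) = (L == I)%:R.
Proof.
rewrite /ext_dot; under eq_bigr => M _ do rewrite !ebasE.
by rewrite sum_delta_l eq_sym.
Qed.

Lemma dcompE (w1 w2 : dvec R n) P Q :
  dcomp w1 w2 (P, Q) = \sum_I w1 (I, Q) * w2 (P, I).
Proof.
rewrite ffunE; apply: eq_bigr => I _.
under eq_bigr => J _ do under eq_bigr => K _ do under eq_bigr => L _ do
  rewrite ext_dot_ebas ffunE /= !ebasE.
rewrite (sum_only (a := Q)); last first.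
  move=> J HJ; apply: big1 => K _; apply: big1 => L _.
  by rewrite [Q == J]eq_sym (negbTE HJ) !mulr0.
rewrite (sum_only (a := P)); last first.
  move=> K HK; apply: big1 => L _.
  by rewrite [P == K]eq_sym (negbTE HK) !mul0r !mulr0.
rewrite (sum_only (a := I)); last first.
  by move=> L HL; rewrite (negbTE HL) !mul0r !mulr0.
by rewrite !eqxx !mulr1.
Qed.

Lemma Dt_swap (hh : 'I_n -> 'I_n -> R) P Q :
  Dt (fun i j => hh j i) P Q = Dt hh Q P.
Proof.
rewrite /Dt eq_sym; case: (eqVneq #|Q| #|P|) => [E|_] //.
rewrite E -det_tr; congr (\det _); apply/matrixP => a b; rewrite !mxE /hn.
by case: (insub _) => [x|]; case: (insub _).
Qed.
End Final.

Theorem proposition1p8 (R : realFieldType) (n : nat)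
  (h : 'rV[R]_n -> 'rV[R]_n -> R)
  (h_linl : forall (a : R) (u v w : 'rV[R]_n), h (a *: u + v) w = a * h u w + h v w)
  (h_linr : forall (a : R) (u v w : 'rV[R]_n), h u (a *: v + w) = a * h u v + h u w)
  (omega : dvec R n) :
  hhatR h omega = dcomp (dexp (form_dvec h)) omega /\
  hhatL h omega = dcomp omega (dexp (form_dvec (form_tr h))).
Proof.
split; apply/ffunP => [[P Q]]; rewrite dcompE ffunE.
- under eq_bigr => I _ do under eq_bigr => J _ do rewrite ffunE /= ebasE hhat_Dt.
  rewrite (sum_only (a := P)); last first.
    by move=> I HI; apply: big1 => J _; rewrite eq_sym (negbTE HI) mul0r mulr0.
  rewrite eqxx; apply: eq_bigr => J _; rewrite dexp_Dt mul1r mulrC.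
  by [].
- under eq_bigr => I _ do under eq_bigr => J _ do rewrite ffunE /= ebasE hhat_Dt.
  rewrite exchange_big (sum_only (a := Q)); last first.
    by move=> J HJ; apply: big1 => I _; rewrite eq_sym (negbTE HJ) mulr0 mulr0.
  apply: eq_bigr => I _; rewrite dexp_Dt eqxx mulr1.
  by rewrite -(Dt_swap (hhh h)).
Qed.
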